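(* Let $D=(E,\mathcal{F})$ be a connected even normal binary delta-matroid with $E\neq\emptyset$. Then ${}^{\partial}w_{D}(z)=mz^{k}$ for some integers $m,k$ (i.e. the twist polynomial has exactly one term) if and only if the intersection graph $G_D$ is a complete graph of odd order.
   Context: A delta-matroid is a set system $(E,\mathcal{F})$, $\mathcal{F}\ne\emptyset$ a family of subsets of finite $E$, satisfying: for all $X,Y\in\mathcal{F}$ and $u\in X\Delta Y$ there is $v\in X\Delta Y$ with $X\Delta\{u,v\}\in\mathcal{F}$. Twist: $D*A=(E,\{A\Delta X:X\in\mathcal{F}\})$. Width $w(D)$ = maximum minus minimum cardinality of feasible sets; twist polynomial ${}^{\partial}w_{D}(z)=\sum_{A\subseteq E}z^{w(D*A)}$. $D$ is normal if $\emptyset\in\mathcal{F}$, and even if $|F\Delta F'|$ is even for all $F,F'\in\mathcal{F}$. The direct sum of delta-matroids on disjoint ground sets is $(E\cup E',\{F\cup F'\})$; $D$ is disconnected if it is a direct sum of two delta-matroids with nonempty ground sets, connected otherwise. For a symmetric matrix $C$ over $GF(2)$ indexed by $E$, $D(C)=(E,\{A\subseteq E: C[A]\text{ nonsingular}\})$ ($C[A]$ principal submatrix, $C[\emptyset]$ nonsingular by convention). $D$ is binary if some twist of it is isomorphic to some $D(C)$. A normal binary $D$ equals $D(C)$ for a unique symmetric $C$; its intersection graph $G_D$ has vertex set $E$, distinct $u,v$ adjacent iff $C_{u,v}=1$, and a loop at $v$ iff $C_{v,v}=1$. For even $D$, $G_D$ is a simple graph, and $D$ is connected iff $G_D$ is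 connected. *)

(* Defs.v *)
From HB Require Import structures.
From mathcomp Require Import all_boot all_order all_algebra all_fingroup.
Set Implicit Arguments. Unset Strict Implicit. Unset Printing Implicit Defensive.
Import GRing.Theory.

Section DeltaMatroids.
Variable E : finType.
Implicit Types (F : {set {set E}}) (A X Y : {set E}).

Definition is_delta_matroid F : Prop :=
  F != set0 /\
  forall X Y, X \in F -> Y \in F -> forall u, u \in (X :\: Y) :|: (Y :\: X) ->
    exists2 v, v \in (X :\: Y) :|: (Y :\: X) &
      (X :\: [set u; v]) :|: ([set u; v] :\: X) \in F.

Definition symdiff A X : {set E} := (A :\: X) :|: (X :\: A).

Definition twist F A : {set {set E}} := [set symdiff A X | X in F].

Definition width F : nat :=
  (\max_(X in F) #|X|) - \big[minn/#|E|]_(X in F) #|X|.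

Definition twist_poly F : {poly int} :=
  \sum_(A : {set E}) 'X^(width (twist F A)).

Definition is_normal F : Prop := set0 \in F.

Definition is_even F : Prop :=
  forall X Y, X \in F -> Y \in F -> ~~ odd #|symdiff X Y|.

Definition is_disconnected F : Prop :=
  exists E1 : {set E}, E1 != set0 /\ ~: E1 != set0 /\
  exists F1 F2 : {set {set E}},
    (forall X, X \in F1 -> X \subset E1) /\
    (forall X, X \in F2 -> X \subset ~: E1) /\
    is_delta_matroid F1 /\ is_delta_matroid F2 /\
    F = [set X :|: Y | X in F1, Y in F2].

Definition is_connected F : Prop := ~ is_disconnected F.

Definition symmetric_mat (C : E -> E -> 'F_2) : Prop :=
  forall u v, C u v = C v u.

Definition principal_submx (C : E -> E -> 'F_2) A : 'M['F_2]_#|A| :=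
  \matrix_(i < #|A|, j < #|A|) C (enum_val i) (enum_val j).

(* D(C) = {A : C[A] nonsingular};  C[set0] is the 0x0 matrix, det = 1. *)
Definition DC (C : E -> E -> 'F_2) : {set {set E}} :=
  [set A : {set E} | (\det (principal_submx C A) != 0)%R].

Definition perm_image (s : {perm E}) F : {set {set E}} := [set (s @: X) | X : {set E} in F].

Definition is_binary F : Prop :=
  exists A, exists C : E -> E -> 'F_2, exists s : {perm E},
    symmetric_mat C /\ twist F A = perm_image s (DC C).

(* Intersection graph of D = D(C): distinct u,v adjacent iff C u v = 1.
   G_D is complete of odd order iff all distinct pairs are adjacent and |E| odd. *)
Definition adj_of (C : E -> E -> 'F_2) (u v : E) : bool := (u != v) && (C u v == 1%R).

Definition complete_odd_order (C : E -> E -> 'F_2) : Prop :=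
  (forall u v : E, u != v -> adj_of C u v) /\ odd #|E|.

End DeltaMatroids.

(* Main.v *)
Require Import Defs.
From HB Require Import structures.
From mathcomp Require Import all_boot all_order all_algebra all_fingroup.
From mathcomp Require Import zify.
Import GRing.Theory.
Set Implicit Arguments. Unset Strict Implicit. Unset Printing Implicit Defensive.
Section Sets.
Variable E : finType.
Implicit Types (F : {set {set E}}) (A X Y : {set E}).

Lemma in_symdiff A X x : (x \in symdiff A X) = (x \in A) (+) (x \in X).
Proof. by rewrite !inE; case: (x \in A); case: (x \in X). Qed.

Lemma symdiffX0 X : symdiff X set0 = X.
Proof. by apply/setP=> x; rewrite in_symdiff inE addbF. Qed.

Lemma symdiffAA A : symdiff A A = set0.
Proof. by apply/setP=> x; rewrite in_symdiff inE addbb. Qed.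

Lemma symdiffK A X : symdiff A (symdiff A X) = X.
Proof. by apply/setP=> x; rewrite !in_symdiff addbA addbb. Qed.

Lemma symdiff_eq0 A X : symdiff A X = set0 -> A = X.
Proof.
move=> h; apply/setP=> x; move/setP/(_ x): h.
by rewrite in_symdiff inE; case: (x \in A); case: (x \in X).
Qed.

Lemma card_symdiff A X : #|symdiff A X| + (#|A :&: X|).*2 = #|A| + #|X|.
Proof.
rewrite /symdiff cardsU.
have -> : (A :\: X) :&: (X :\: A) = set0.
  by apply/setP=> x; rewrite !inE; case: (x \in A); case: (x \in X).
rewrite cards0 subn0 !cardsD [X :&: A]setIC.
have h1 : #|A :&: X| <= #|A| by apply/subset_leq_card/subsetIl.
have h2 : #|A :&: X| <= #|X| by apply/subset_leq_card/subsetIr.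
rewrite -addnn. lia.
Qed.

Lemma odd_symdiff A X : odd #|symdiff A X| = odd #|A| (+) odd #|X|.
Proof.
have := congr1 odd (card_symdiff A X).
by rewrite !oddD odd_double addbF.
Qed.

End Sets.
Lemma bigmin_le (T : eqType) (r : seq T) (P : pred T) (f : T -> nat) d i0 :
  i0 \in r -> P i0 -> \big[minn/d]_(i <- r | P i) f i <= f i0.
Proof.
elim: r => //= a r IH; rewrite in_cons big_cons => /orP [/eqP-> Pi | ir Pi].
  by rewrite Pi geq_minl.
case: (P a); last exact: IH.
by rewrite geq_min IH ?orbT.
Qed.

Section W.
Variable E : finType.
Implicit Types (F : {set {set E}}) (A X Y : {set E}).

Lemma width_lb F A Y1 Y2 : Y1 \in F -> Y2 \in F ->
  #|symdiff A Y1| - #|symdiff A Y2| <= width (twist F A).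
Proof.
move=> h1 h2; rewrite /width; apply: leq_sub.
  by apply: (leq_bigmax_cond (symdiff A Y1)); apply: imset_f.
apply: bigmin_le; first by rewrite mem_index_enum.
by apply: imset_f.
Qed.

Lemma width_ub F A M m : (exists X, X \in F) ->
  (forall X, X \in F -> #|symdiff A X| <= M) ->
  (forall X, X \in F -> m <= #|symdiff A X|) ->
  width (twist F A) <= M - m.
Proof.
move=> [X0 HX0] hM hm; rewrite /width; apply: leq_sub.
  by apply/bigmax_leqP => Y /imsetP [X HX ->]; apply: hM.
apply: (big_ind (fun x => m <= x)).
- by apply: leq_trans (hm _ HX0) (max_card _).
- by move=> x y hx hy; rewrite leq_min hx hy.
- by move=> Y /imsetP [X HX ->]; apply: hm.
Qed.

End W.
Local Open Scope ring_scope.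
Lemma F2_cases (x : 'F_2) : x = 0 \/ x = 1.
Proof. by case: x => [[|[|]]] //= ?; [left|right]; apply/val_inj. Qed.

Lemma F2_nat n : (n%:R : 'F_2) = (odd n)%:R.
Proof. by rewrite -(@Fp_nat_mod 2) // modn2. Qed.

Lemma F2_opp (x : 'F_2) : - x = x.
Proof. by case: (F2_cases x) => ->; [rewrite oppr0 | apply/val_inj]. Qed.

Lemma F2_neq0 (x : 'F_2) : (x != 0) = (x == 1).
Proof. by case: (F2_cases x) => ->. Qed.

Lemma constJJ k (a b : nat) :
  (const_mx 1 : 'M['F_2]_(a, k)) *m (const_mx 1 : 'M['F_2]_(k, b)) = const_mx (k%:R).
Proof.
apply/matrixP=> i j; rewrite !mxE.
rewrite (eq_bigr (fun _ => 1)); last by move=> l _; rewrite !mxE mulr1.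
by rewrite sumr_const card_ord.
Qed.

Lemma detJI k :
  (\det (\matrix_(i < k, j < k) ((i != j)%:R : 'F_2)) != 0) = ~~ odd k.
Proof.
have -> : \matrix_(i < k, j < k) ((i != j)%:R : 'F_2) = const_mx 1 - 1%:M.
  apply/matrixP=> i j; rewrite !mxE; case: (i == j).
    by rewrite /= mulr1n subrr.
  by rewrite /= mulr0n subr0.
case ok: (odd k) => /=.
  apply/negPn/det0P; exists (const_mx 1).
    case: k ok => // k' _; apply/eqP => /matrixP /(_ 0 0); rewrite !mxE.
    by move/eqP; rewrite oner_eq0.
  rewrite mulmxBr mulmx1 constJJ F2_nat ok.
  by apply/matrixP => i j; rewrite !mxE mulr1n subrr.
have hsq : (const_mx 1 - 1%:M : 'M['F_2]_k) *m (const_mx 1 - 1%:M) = 1%:M.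
  rewrite mulmxBl !mulmxBr !mulmx1 mul1mx constJJ F2_nat ok.
  apply/matrixP => i j; rewrite !mxE.
  case: (i == j) => /=; first by apply/val_inj.
  by rewrite ?mulr0n; apply/val_inj.
apply/eqP => h0; have := congr1 (@determinant _ _) hsq.
by rewrite det_mulmx h0 mul0r det1 => /eqP; rewrite eq_sym oner_eq0.
Qed.
Lemma det_cast (R : comPzRingType) n m (e : n = m) (f : 'I_m -> 'I_m -> R) :
  \det (\matrix_(i < n, j < n) f (cast_ord e i) (cast_ord e j)) =
  \det (\matrix_(i < m, j < m) f i j).
Proof.
case: m / e f => f.
by congr (\det _); apply/matrixP=> i j; rewrite !mxE !cast_ord_id.
Qed.

Section D1.
Variable E : finType.
Variable C : E -> E -> 'F_2.

Lemma det_reidx n (g1 g2 : 'I_n -> E) :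
  injective g1 -> injective g2 -> (forall i, g1 i \in codom g2) ->
  \det (\matrix_(i < n, j < n) C (g1 i) (g1 j)) =
  \det (\matrix_(i < n, j < n) C (g2 i) (g2 j)).
Proof.
move=> i1 i2 hc.
pose s i := iinv (hc i).
have hs i : g2 (s i) = g1 i by rewrite /s f_iinv.
have sinj : injective s by move=> a b hab; apply: i1; rewrite -!hs hab.
pose p := perm sinj.
have -> : \matrix_(i < n, j < n) C (g1 i) (g1 j) =
   row_perm p (col_perm p (\matrix_(i < n, j < n) C (g2 i) (g2 j))).
  by apply/matrixP=> i j; rewrite !mxE !permE !hs.
rewrite row_permE col_permE !det_mulmx !det_perm odd_permV.
by rewrite mulrC -mulrA -expr2 sqrr_sign mulr1.
Qed.

Lemma psub_reindex n (h : 'I_n -> E) (X : {set E}) :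
  injective h -> X = [set h i | i : 'I_n] ->
  \det (principal_submx C X) = \det (\matrix_(i < n, j < n) C (h i) (h j)).
Proof.
move=> hinj hX.
have e : n = #|X| by rewrite hX card_imset // card_ord.
rewrite /principal_submx -(det_cast e).
apply: det_reidx => //.
- by move=> a b /enum_val_inj /cast_ord_inj.
- move=> i; have : enum_val (cast_ord e i) \in X by apply: enum_valP.
  move: (enum_val _) => x; rewrite hX.
  by case/imsetP=> j _ ->; apply: codom_f.
Qed.

End D1.
Lemma splitl m n (j : 'I_m) : split (lshift n j) = inl j.
Proof. exact: (unsplitK (inl j)). Qed.
Lemma splitr m n (j : 'I_n) : split (rshift m j) = inr j.
Proof. exact: (unsplitK (inr j)). Qed.
Section D2.
Variable E : finType.
Variable C : E -> E -> 'F_2.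

Lemma psub_block (E1 X : {set E}) :
  (forall x y, x \in E1 -> y \notin E1 -> C x y = 0) ->
  (forall x y, x \in E1 -> y \notin E1 -> C y x = 0) ->
  \det (principal_submx C X) =
  \det (principal_submx C (X :&: E1)) * \det (principal_submx C (X :\: E1)).
Proof.
move=> h12 h21.
set X1 := X :&: E1; set X2 := X :\: E1.
pose h (i : 'I_(#|X1| + #|X2|)) : E :=
  match split i with inl j => enum_val j | inr k => enum_val k end.
have in1 (j : 'I_#|X1|) : enum_val j \in X1 by apply: enum_valP.
have in2 (j : 'I_#|X2|) : enum_val j \in X2 by apply: enum_valP.
have hinj : injective h.
  move=> i i'; rewrite /h -[i]splitK -[i']splitK !unsplitK.
  case: (split i) => a; case: (split i') => b //=.
  - by move/enum_val_inj->.
  - move=> e; have := in1 a; have := in2 b; rewrite e !inE.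
    by case: (_ \in E1); rewrite ?andbF.
  - move=> e; have := in2 a; have := in1 b; rewrite e !inE.
    by case: (_ \in E1); rewrite ?andbF.
  - by move/enum_val_inj->.
have hX : X = [set h i | i : 'I_(#|X1| + #|X2|)].
  apply/setP=> x; apply/idP/imsetP.
  - move=> xX; case xE: (x \in E1).
    + have x1 : x \in X1 by rewrite !inE xX xE.
      exists (lshift #|X2| (enum_rank_in x1 x)) => //.
      by rewrite /h (unsplitK (inl _)) enum_rankK_in.
    + have x2 : x \in X2 by rewrite !inE xX xE.
      exists (rshift #|X1| (enum_rank_in x2 x)) => //.
      by rewrite /h (unsplitK (inr _)) enum_rankK_in.
  - case=> i _ ->; rewrite /h; case: (split i) => a.
    + by have := in1 a; rewrite inE => /andP [].
    + by have := in2 a; rewrite inE => /andP [].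
rewrite (psub_reindex C hinj hX).
have -> : \matrix_(i, j) C (h i) (h j) =
   block_mx (principal_submx C X1) 0 0 (principal_submx C X2).
  apply/matrixP=> i j; rewrite -[i]splitK -[j]splitK.
  case: (split i) => a; case: (split j) => b /=.
  - by rewrite block_mxEul !mxE /h ?splitl ?splitr.
  - rewrite block_mxEur !mxE /h ?splitl ?splitr /=; apply: h12.
      by have := in1 a; rewrite inE => /andP [].
    by have := in2 b; rewrite !inE => /andP [].
  - rewrite block_mxEdl !mxE /h ?splitl ?splitr /=; apply: h21.
      by have := in1 b; rewrite inE => /andP [].
    by have := in2 a; rewrite !inE => /andP [].
  - by rewrite block_mxEdr !mxE /h ?splitl ?splitr.
by rewrite det_ublock.
Qed.
End D2.

Lemma poly_single (E : finType) (F : {set {set E}}) :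
  (exists (m : int) (k : nat), twist_poly F = m%:P * 'X^k) <->
  (exists k, forall A, width (twist F A) = k).
Proof.
split.
  move=> [m [k h]]; exists k => A; apply/eqP; apply: contraT => hne.
  have := congr1 (fun p : {poly int} => p`_(width (twist F A))) h.
  rewrite /= coefCM coefXn (negbTE hne) mulr0 /twist_poly coef_sum.
  under eq_bigr do rewrite coefXn.
  rewrite -natr_sum => /eqP; rewrite Num.Theory.pnatr_eq0 (bigD1 A) //=.
  by rewrite eqxx.
move=> [k h]; exists (#|{: {set E}}|)%:R, k.
rewrite /twist_poly (eq_bigr (fun _ => 'X^k)); last by move=> A _; rewrite h.
by rewrite sumr_const polyC_natr mulr_natl.
Qed.

Lemma even_lt (a b : nat) : ~~ odd a -> ~~ odd b -> (a < b)%N -> (a.+2 <= b)%N.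
Proof.
move=> ha hb hab; have : (b - a != 1)%N.
  by apply/negP => /eqP e; move: (oddB (ltnW hab)); rewrite e (negbTE ha) (negbTE hb).
lia.
Qed.

Lemma card_set1I (E : finType) (v : E) (X : {set E}) :
  #|[set v] :&: X| = (v \in X).
Proof.
case vX: (v \in X).
  have -> : [set v] :&: X = [set v] by apply/setIidPl; rewrite sub1set.
  by rewrite cards1.
have -> : [set v] :&: X = set0 by apply/setP=> x; rewrite !inE; case: eqP => // ->.
by rewrite cards0.
Qed.

Lemma ar1 (a b c : nat) : b = (a + c)%N -> (a <= 1)%N -> (2 <= b)%N -> (0 < c)%N.
Proof. lia. Qed.
Lemma ar3 (a b n : nat) : a = (1 + b)%N -> (a <= n.+1)%N -> (b <= n)%N.
Proof. lia. Qed.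

Section Main.
Variable E : finType.
Variable F : {set {set E}}.
Variable C : E -> E -> 'F_2.
Hypothesis hdm : is_delta_matroid F.
Hypothesis hnorm : is_normal F.
Hypothesis heven : is_even F.
Hypothesis hCsym : symmetric_mat C.
Hypothesis hDC : F = DC C.

Lemma Fdef X : (X \in F) = (\det (principal_submx C X) != 0).
Proof. by rewrite hDC inE. Qed.

Lemma Feven X : X \in F -> ~~ odd #|X|.
Proof. by move=> hX; have := heven hX hnorm; rewrite symdiffX0. Qed.

Lemma Cdiag v : C v v = 0.
Proof.
have hinj : injective (fun _ : 'I_1 => v) by move=> i j _; rewrite !ord1.
have hX : [set v] = [set (fun _ : 'I_1 => v) i | i : 'I_1].
  apply/setP=> x; rewrite inE; apply/eqP/imsetP => [->|[i _ ->]] //.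
  by exists ord0.
have := Feven (X:=[set v]); rewrite cards1 /= Fdef (psub_reindex C hinj hX).
rewrite det_mx11 mxE.
by case: (F2_cases (C v v)) => -> // /(_ (oner_neq0 _)).
Qed.

Lemma Fpair u v : u != v -> ([set u; v] \in F) = (C u v == 1).
Proof.
move=> uv.
pose h (i : 'I_2) := if i == ord0 then u else v.
have hinj : injective h.
  by move=> i j; rewrite /h; case: i => [[|[|]]] //; case: j => [[|[|]]] //=;
     move=> ? ? e; apply/val_inj => //=; move: uv; rewrite e eqxx.
have hX : [set u; v] = [set h i | i : 'I_2].
  apply/setP=> x; rewrite !inE; apply/idP/imsetP.
    by case/orP=> /eqP ->; [exists ord0 | exists ord_max].
  by case=> i _ ->; rewrite /h; case: (i == ord0); rewrite eqxx ?orbT.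
rewrite Fdef (psub_reindex C hinj hX).
have -> : \matrix_(i, j) C (h i) (h j) = C u v *: \matrix_(i < 2, j < 2) ((i != j)%:R : 'F_2).
  apply/matrixP=> i j; rewrite !mxE /h.
  by case: i => [[|[|]]] //; case: j => [[|[|]]] //= *;
     rewrite ?Cdiag ?mulr0 ?mulr1 // hCsym.
case: (F2_cases (C u v)) => ->; first by rewrite scale0r det0 eqxx.
by rewrite scale1r detJI eqxx.
Qed.

Local Notation r := (\max_(X in F) #|X|)%N.

Lemma rmax X : X \in F -> (#|X| <= r)%N.
Proof. by move=> hX; apply: (leq_bigmax_cond X). Qed.

Lemma rex : exists2 X, X \in F & #|X| = r.
Proof.
have : (0 < #|F|)%N by apply/card_gt0P; exists set0.
by case/(eq_bigmax_cond (fun X : {set E} => #|X|)) => X hX ->; exists X.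
Qed.

Lemma reven : ~~ odd r.
Proof. by case: rex => X hX <-; apply: Feven. Qed.

Lemma symdiff0X (X : {set E}) : symdiff set0 X = X.
Proof. by apply/setP=> x; rewrite in_symdiff inE. Qed.

Lemma L_k k : (forall A, width (twist F A) = k) -> k = r.
Proof.
move=> H; apply/eqP; rewrite eqn_leq; apply/andP; split.
  rewrite -(H set0) -[X in (_ <= X)%N](subn0 r); apply: width_ub.
  - by exists set0.
  - by move=> X hX; rewrite symdiff0X; apply: rmax.
  - by [].
rewrite -(H set0); case: rex => X hX hr.
by have := width_lb set0 hX hnorm; rewrite !symdiff0X cards0 subn0 hr.
Qed.

Section WithH.
Hypothesis H : forall A, width (twist F A) = r.

Lemma L_a v : exists2 X, X \in F & (#|X| == r) && (v \notin X).
Proof.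
move: H (@rmax) reven; move: (\max_(X in F) #|X|)%N => R H' rmax' reven'.
case: (boolP [exists X, [&& X \in F, #|X| == R & v \notin X]]).
  by case/existsP => X /and3P [? ? ?]; exists X => //; apply/andP.
rewrite negb_exists => /forallP hno.
case r0: (R == 0)%N.
  by exists set0 => //; rewrite cards0 eq_sym r0 inE.
exfalso.
have hr2 : (2 <= R)%N by apply: (even_lt (a:=0%N)) => //; rewrite lt0n r0.
have : (width (twist F [set v]) <= R - 1 - 1)%N.
  apply: width_ub; first by exists set0.
  - move=> X hX; have hc := card_symdiff [set v] X.
    rewrite cards1 card_set1I in hc; have hXr := rmax' _ hX.
    case vX: (v \in X); rewrite vX /= -?addnn in hc; first by lia.
    have := hno X; rewrite hX vX /= andbT => hne.
    have := even_lt (Feven hX) reven'; rewrite ltn_neqAle hne hXr => /(_ isT).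
    lia.
  - move=> X hX; apply: odd_gt0.
    by rewrite odd_symdiff cards1 (negbTE (Feven hX)).
rewrite H'; lia.
Qed.

Lemma L_b u v : C u v = 1 -> forall X, X \in F -> #|X| = r -> (u \in X) || (v \in X).
Proof.
move: H (@rmax) reven; move: (\max_(X in F) #|X|)%N => R H' rmax' reven'.
move=> cuv X hX hXr; apply: contraT; rewrite negb_or => /andP [uX vX].
have uv : u != v.
  by apply/eqP => e; move: cuv; rewrite e Cdiag => /eqP; rewrite eq_sym oner_eq0.
have hA : [set u; v] \in F by rewrite Fpair // cuv.
have := width_lb [set u; v] hX hA; rewrite H' symdiffAA cards0 subn0.
have hc := card_symdiff [set u; v] X.
have e0 : [set u; v] :&: X = set0.
  apply/setP=> x; rewrite !inE; case: eqP => [->|_]; first by rewrite (negbTE uX).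
  by case: eqP => [->|_] //; rewrite (negbTE vX).
rewrite e0 cards0 cards2 uv hXr /= -?addnn in hc.
lia.
Qed.

Lemma L_c u v : u != v -> C u v = 0 ->
  exists2 X, X \in F & [&& #|X| == r, u \notin X & v \notin X].
Proof.
move: H (@rmax) reven; move: (\max_(X in F) #|X|)%N => R H' rmax' reven'.
move=> uv cuv.
case: (boolP [exists X, [&& X \in F, #|X| == R, u \notin X & v \notin X]]).
  by case/existsP => X /and4P [? ? ? ?]; exists X => //; apply/and3P.
rewrite negb_exists => /forallP hno.
case r0: (R == 0)%N.
  by exists set0 => //; rewrite cards0 eq_sym r0 !inE.
exfalso.
have hr2 : (2 <= R)%N by apply: (even_lt (a:=0%N)) => //; rewrite lt0n r0.
have hAF : [set u; v] \notin F by rewrite Fpair // cuv eq_sym oner_eq0.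
have : (width (twist F [set u; v]) <= R - 2)%N.
  apply: width_ub; first by exists set0.
  - move=> X hX; have hc := card_symdiff [set u; v] X; rewrite cards2 uv -addnn in hc.
    have hXr := rmax' _ hX.
    case: (boolP ([set u; v] :&: X == set0)) => [/eqP h0 | hne].
      have uX : u \notin X.
        by apply/negP => ux; move/setP/(_ u): h0; rewrite !inE eqxx ux.
      have vX : v \notin X.
        by apply/negP => vx; move/setP/(_ v): h0; rewrite !inE eqxx vx orbT.
      rewrite h0 cards0 in hc.
      have := hno X; rewrite hX uX vX /= andbT => hne.
      have := even_lt (Feven hX) reven'; rewrite ltn_neqAle hne hXr => /(_ isT).
      lia.
    have : (0 < #|[set u; v] :&: X|)%N by rewrite card_gt0.
    lia.
  - move=> X hX.
    have he : ~~ odd #|symdiff [set u; v] X|.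
      by rewrite odd_symdiff cards2 uv /= (negbTE (Feven hX)).
    have hne : symdiff [set u; v] X != set0.
      by apply/eqP => /symdiff_eq0 e; move: hAF; rewrite e hX.
    by apply: (even_lt (a:=0%N)) => //; rewrite card_gt0.
rewrite H'; lia.
Qed.

Lemma L_compl : (forall u v, u != v -> C u v = 1) -> forall v : E, odd #|E|.
Proof.
move=> hcomp v.
case: (L_a v) => X hX /andP [/eqP hXr vX].
have eX : X = [set~ v].
  apply/setP=> y; rewrite !inE; case: (eqVneq y v) => [->|yv]; first by rewrite (negbTE vX).
  by have := L_b (hcomp y v yv) hX hXr; rewrite (negbTE vX) orbF.
have hpos : (0 < #|E|)%N by apply/card_gt0P; exists v.
have := Feven hX; rewrite eX cardsC1.
by case: #|E| hpos => // n _ /=; rewrite negbK.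
Qed.

Lemma L_P3 u v w : u != v -> C u w = 1 -> C v w = 1 -> C u v = 0 -> False.
Proof.
move=> uv cuw cvw cuv.
move: (L_a) (L_b) (L_c) (@rmax) reven.
move: (\max_(X in F) #|X|)%N => R La Lb Lc rmax' reven'.
case: (Lc _ _ uv cuv) => X hX /and3P [/eqP hXr uX vX].
case: (La w) => Y0 hY0 /andP [/eqP hY0r wY0].
have uY0 : u \in Y0 by have := Lb _ _ cuw _ hY0 hY0r; rewrite (negbTE wY0) orbF.
have vY0 : v \in Y0 by have := Lb _ _ cvw _ hY0 hY0r; rewrite (negbTE wY0) orbF.
suff: forall n Y, Y \in F -> #|Y| = R -> w \notin Y -> u \in Y -> v \in Y ->
    (#|Y :\: X| <= n)%N -> False.
  by move/(_ _ Y0 hY0 hY0r wY0 uY0 vY0 (leqnn _)).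
elim=> [|n IH] Y hY hYr wY uY vY hn.
  have : (0 < #|Y :\: X|)%N by apply/card_gt0P; exists u; rewrite inE uY uX.
  by rewrite leqn0 in hn; rewrite (eqP hn).
have h2 : (2 <= #|Y :\: X|)%N.
  have <- : #|[set u; v]| = 2%N by rewrite cards2 uv.
  apply: subset_leq_card; apply/subsetP => t; rewrite !inE.
  by case/orP => /eqP ->; rewrite ?uY ?uX ?vY ?vX.
have hsym : #|X :\: Y| = #|Y :\: X| by rewrite !cardsD hXr hYr setIC.
have : (0 < #|(X :\: Y) :\ w|)%N.
  by apply: (ar1 (cardsD1 w (X :\: Y))); rewrite ?leq_b1 ?hsym.
case/card_gt0P => x; rewrite !inE => /and3P [xw xY xX].
have hxin : x \in (Y :\: X) :|: (X :\: Y) by rewrite !inE xY xX orbT.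
case: (hdm.2 Y X hY hX x hxin) => z hz hY'.
have hY'' : symdiff Y [set x; z] \in F := hY'.
have mem t : (t \in symdiff Y [set x; z]) = (t \in Y) (+) ((t == x) || (t == z)).
  by rewrite in_symdiff !inE.
move: hz; rewrite !inE => /orP [/andP [zX zY] | /andP [zY zX]]; last first.
  have hp : Y \proper symdiff Y [set x; z].
    apply/properP; split.
      apply/subsetP => t tY; rewrite mem tY.
      have -> : (t == x) = false by apply/eqP => e; move: xY; rewrite -e tY.
      by have -> : (t == z) = false by apply/eqP => e; move: zY; rewrite -e tY.
    by exists x; [rewrite mem eqxx (negbTE xY) |].
  by have := proper_card hp; rewrite hYr ltnNge rmax'.
have zx : z != x by apply/eqP => e; move: xY; rewrite -e zY.
set Y' := symdiff Y [set x; z].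
have eY' : Y' = x |: (Y :\ z).
  apply/setP => t; rewrite mem !inE.
  case: (eqVneq t x) => [->|tx].
    by rewrite (negbTE xY).
  case: (eqVneq t z) => [->|tz] /=; first by rewrite zY.
  by rewrite addbF.
have cardY' : #|Y'| = R.
  rewrite eY' cardsU1 !inE (negbTE xY) andbF /=.
  by have := cardsD1 z Y; rewrite zY hYr => ->.
have wY' : w \notin Y'.
  rewrite mem (negbTE wY) /= eq_sym (negbTE xw) /=.
  by apply/eqP => e; move: wY; rewrite e zY.
case: (eqVneq z u) => [zu|zu].
  have := Lb _ _ cuw _ hY'' cardY'.
  by rewrite (negbTE wY') orbF mem uY -zu eqxx orbT.
case: (eqVneq z v) => [zv|zv].
  have := Lb _ _ cvw _ hY'' cardY'.
  by rewrite (negbTE wY') orbF mem vY -zv eqxx orbT.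
have uY' : u \in Y'.
  rewrite mem uY [u == z]eq_sym (negbTE zu) orbF addTb.
  by apply/negP => /eqP e; move: xX; rewrite -e (negbTE uX).
have vY' : v \in Y'.
  rewrite mem vY [v == z]eq_sym (negbTE zv) orbF addTb.
  by apply/negP => /eqP e; move: xX; rewrite -e (negbTE vX).
apply: (IH Y' hY'' cardY' wY' uY' vY').
have -> : Y' :\: X = (Y :\: X) :\ z.
  apply/setP => t; rewrite in_setD mem !inE.
  case: (eqVneq t x) => [->|tx]; first by rewrite xX /= andbF.
  case: (eqVneq t z) => [->|tz] /=; first by rewrite zY andbF.
  by rewrite addbF.
apply: (ar3 _ hn); have := cardsD1 z (Y :\: X); rewrite !inE zX zY /=.
by move=> ->.
Qed.

End WithH.

End Main.

Section Disc.
Variable E : finType.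
Variable F : {set {set E}}.
Variable C : E -> E -> 'F_2.
Hypothesis hdm : is_delta_matroid F.
Hypothesis hnorm : is_normal F.
Hypothesis hCsym : symmetric_mat C.
Hypothesis hDC : F = DC C.

Lemma prodF (E1 : {set E}) :
  (forall x y, x \in E1 -> y \notin E1 -> C x y = 0) ->
  forall Z, (Z \in F) = (Z :&: E1 \in F) && (Z :&: ~: E1 \in F).
Proof.
move=> h12 Z.
have h21 x y : x \in E1 -> y \notin E1 -> C y x = 0 by move=> *; rewrite hCsym h12.
by rewrite !(Fdef hDC) (psub_block Z h12 h21) setDE mulf_eq0 negb_or.
Qed.

Lemma restr_dm (P : {set E}) :
  (forall Z, (Z \in F) = (Z :&: P \in F) && (Z :&: ~: P \in F)) ->
  is_delta_matroid [set X :&: P | X in F].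
Proof.
move=> hP; split.
  by apply/set0Pn; exists (set0 :&: P); apply: imset_f.
move=> X1 Y1 /imsetP [A hA ->] /imsetP [B hB ->] u hu.
set B' := (B :&: P) :|: (A :&: ~: P).
have hB' : B' \in F.
  rewrite hP.
  have -> : B' :&: P = B :&: P.
    by apply/setP=> t; rewrite !inE; case: (t \in P); rewrite ?andbF ?andbT ?orbF.
  have -> : B' :&: ~: P = A :&: ~: P.
    by apply/setP=> t; rewrite !inE; case: (t \in P); rewrite ?andbF ?andbT ?orbF.
  by move: hA hB; rewrite (hP A) (hP B) => /andP [_ ->] /andP [-> _].
have eS : symdiff A B' = symdiff (A :&: P) (B :&: P).
  apply/setP => t; rewrite !in_symdiff !inE.
  by case: (t \in P); case: (t \in A); case: (t \in B).
have inP t : t \in symdiff (A :&: P) (B :&: P) -> t \in P.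
  by rewrite in_symdiff !inE; case: (t \in P); rewrite ?andbF.
have hu' : u \in symdiff A B' by rewrite eS.
case: (hdm.2 A B' hA hB' u hu') => v hv hAv.
have hv' : v \in symdiff (A :&: P) (B :&: P) by rewrite -eS.
exists v => //.
change (symdiff (A :&: P) [set u; v] \in [set X :&: P | X in F]).
apply/imsetP; exists (symdiff A [set u; v]) => //.
apply/setP => t; rewrite !in_symdiff !inE.
have uP := inP _ hu; have vP := inP _ hv'.
case tP: (t \in P); rewrite ?andbT ?andbF //.
  by case: (t \in A); case: (_ || _).
rewrite /=; apply/negbTE; apply/norP; split; apply/eqP => e;
  [move: uP | move: vP]; by rewrite -e tP.
Qed.

Lemma L_disc :
  (forall u v w, u != v -> C u w = 1 -> C v w = 1 -> C u v = 0 -> False) ->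
  forall p q, p != q -> C p q = 0 -> is_disconnected F.
Proof.
move=> hno p q pq cpq.
pose E1 := [set x | (x == p) || (C p x == 1)].
have hcross x y : x \in E1 -> y \notin E1 -> C x y = 0.
  move=> hx hy; case: (F2_cases (C x y)) => // cxy; exfalso.
  move: hx hy; rewrite !inE => /orP [/eqP xp | /eqP cpx].
    by rewrite -xp cxy eqxx orbT.
  rewrite negb_or => /andP [yp cpy].
  apply: (hno p y x) => //.
  - by rewrite eq_sym.
  - by rewrite hCsym.
  - by case: (F2_cases (C p y)) cpy => // ->; rewrite eqxx.
have hP := prodF hcross.
exists E1; split.
  by apply/set0Pn; exists p; rewrite inE eqxx.
split.
  apply/set0Pn; exists q; rewrite !inE negb_or cpq eq_sym pq /=.
  by [].
exists [set X :&: E1 | X in F], [set X :&: ~: E1 | X in F].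
split; first by move=> X /imsetP [A _ ->]; apply: subsetIr.
split; first by move=> X /imsetP [A _ ->]; apply: subsetIr.
split; first exact: restr_dm.
split.
  apply: restr_dm => Z; rewrite setCK andbC; exact: hP.
apply/setP => Z; apply/idP/imset2P.
  move=> hZ; exists (Z :&: E1) (Z :&: ~: E1).
  - by apply: imset_f.
  - by apply: imset_f.
  - apply/setP=> t; rewrite !(in_setI, in_setU, in_setC); case: (t \in E1); rewrite ?andbT ?andbF ?orbF ?orFb // orbF.
case=> X1 Y1 /imsetP [A hA ->] /imsetP [B hB ->] ->.
rewrite hP.
have -> : (A :&: E1 :|: B :&: ~: E1) :&: E1 = A :&: E1.
  by apply/setP=> t; rewrite !(in_setI, in_setU, in_setC); case: (t \in E1); rewrite ?andbT ?andbF ?orbF.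
have -> : (A :&: E1 :|: B :&: ~: E1) :&: ~: E1 = B :&: ~: E1.
  by apply/setP=> t; rewrite !(in_setI, in_setU, in_setC); case: (t \in E1); rewrite ?andbT ?andbF ?orbF.
by move: hA hB; rewrite (hP A) (hP B) => /andP [-> _] /andP [_ ->].
Qed.

End Disc.

Lemma L_if (E : finType) (F : {set {set E}}) (a : E) :
  (forall X, (X \in F) = ~~ odd #|X|) -> odd #|E| ->
  forall A, width (twist F A) = #|E|.-1.
Proof.
move=> Feq hodd A.
have hpos : (0 < #|E|)%N by apply/card_gt0P; exists a.
have oT : odd #|[set: E]| by rewrite cardsT.
have oC : ~~ odd #|[set~ a]| by rewrite cardsC1; case: #|E| hodd hpos => //= n; rewrite negbK.
have F0 : set0 \in F by rewrite Feq cards0.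
apply/eqP; rewrite eqn_leq; apply/andP; split.
  case oA: (odd #|A|).
    rewrite -subn1; apply: width_ub; first by exists set0.
    - by move=> X _; apply: max_card.
    - move=> X hX; apply: odd_gt0.
      by rewrite odd_symdiff oA; move: hX; rewrite Feq => /negbTE ->.
  rewrite -(subn0 #|E|.-1); apply: width_ub; first by exists set0.
  - move=> X hX.
    have hle := max_card (mem (symdiff A X)).
    have hne : #|symdiff A X| != #|E|.
      apply/eqP => e; move: hodd; rewrite -e odd_symdiff oA.
      by move: hX; rewrite Feq => /negbTE ->.
    move: hle hne; rewrite leq_eqVlt => /orP [/eqP -> | ]; first by rewrite eqxx.
    by move=> h _; rewrite -ltnS prednK.
  - by [].
case oA: (odd #|A|).
  have h1 : symdiff A [set: E] \in F.
    by rewrite Feq odd_symdiff oA oT.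
  have h2 : symdiff A [set a] \in F.
    by rewrite Feq odd_symdiff oA cards1.
  have := width_lb A h1 h2; rewrite !symdiffK cardsT cards1 subn1.
  by [].
have h1 : symdiff A [set~ a] \in F.
  by rewrite Feq odd_symdiff oA /= (negbTE oC).
have h2 : symdiff A set0 \in F.
  by rewrite Feq odd_symdiff oA cards0.
have := width_lb A h1 h2; rewrite !symdiffK cardsC1 cards0 subn0.
by [].
Qed.

Unset Implicit Arguments.
Theorem mainTheorem9 (E : finType) (F : {set {set E}})
  (C : E -> E -> 'F_2)
  (hdm : is_delta_matroid F) (hconn : is_connected F) (heven : is_even F)
  (hnorm : is_normal F) (hbin : is_binary F) (hE : (0 < #|E|)%N)
  (hCsym : symmetric_mat C) (hDC : F = DC C) :
  (exists (m : int) (k : nat), twist_poly F = m%:P * 'X^k) <->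
  complete_odd_order C.
Proof.
rewrite poly_single; split.
  move=> [k H]; have ek := L_k hnorm H; rewrite ek in H.
  have hcomp : forall u v, u != v -> C u v = 1.
    move=> u v uv; case: (F2_cases (C u v)) => // cuv; exfalso.
    case: (boolP [exists u', exists v', exists w,
        [&& u' != v', C u' w == 1, C v' w == 1 & C u' v' == 0]]).
      case/existsP => u' /existsP [v' /existsP [w /and4P [h1 /eqP h2 /eqP h3 /eqP h4]]].
      exact: (L_P3 hdm hnorm heven hCsym hDC H h1 h2 h3 h4).
    rewrite negb_exists => /forallP hno.
    apply: hconn; apply: (L_disc hdm hnorm hCsym hDC _ uv cuv).
    move=> a b c ab h1 h2 h3.
    move: (hno a); rewrite negb_exists => /forallP /(_ b).
    rewrite negb_exists => /forallP /(_ c).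
    by rewrite ab h1 h2 h3 !eqxx.
  split.
    by move=> u v uv; rewrite /adj_of uv hcomp // eqxx.
  case/card_gt0P: hE => v _.
  exact: (L_compl hnorm heven hCsym hDC H hcomp v).
move=> [hadj hodd].
case/card_gt0P: hE => a _.
exists #|E|.-1; apply: (L_if a) => // X.
rewrite (Fdef hDC).
have -> : principal_submx C X = \matrix_(i < #|X|, j < #|X|) ((i != j)%:R : 'F_2).
  apply/matrixP => i j; rewrite !mxE.
  case: (eqVneq i j) => [->|ij]; first by rewrite (Cdiag hnorm heven hDC).
  have hne : enum_val i != enum_val j :> E by rewrite (inj_eq enum_val_inj).
  by have /andP [_ /eqP ->] := hadj _ _ hne.
exact: detJI.
Qed.
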